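(* Let $\mathcal{C}$ be an idempotent complete preadditive category that has weak kernels and weak cokernels, and let $n$ be a nonnegative integer. Then $\mathcal{C}$ has $n$-kernels if and only if $\mathcal{C}$ has $n$-cokernels.
   Context: A preadditive category is idempotent complete if every idempotent $e : X \to X$ splits, i.e. there are morphisms $f : Y \to X$ and $g : X \to Y$ with $fg = e$ and $gf = 1_Y$. A weak kernel of $f : A \to B$ is a morphism $k : K \to A$ with $fk = 0$ such that every $u : U \to A$ with $fu = 0$ factors (not necessarily uniquely) as $u = kv$; weak cokernels are defined dually. $\mathcal{C}$ has weak kernels (resp. weak cokernels) if every morphism has one. For $n \geqslant 1$: an $n$-kernel of a morphism $f : A \to A'$ is a sequence of morphisms $B_1 \xrightarrow{b_1} B_2 \xrightarrow{b_2} \cdots \xrightarrow{b_{n-1}} B_n \xrightarrow{b_n} A$ such that for every object $X$ the sequence of abelian groups $0 \to \mathcal{C}(X,B_1) \to \cdots \to \mathcal{C}(X,B_n) \to \mathcal{C}(X,A) \to \mathcal{C}(X,A')$ (induced by composition) is exact; equivalently, $b_1$ is a monomorphism, $b_i$ is a weak kernel of $b_{i+1}$ for $1 \leqslant i \leqslant n-1$, and $b_n$ is a weak kernel of $f$. Dually, an $n$-cokernel of $f : A \to A'$ is a sequence $A' \xrightarrow{c_0} C_1 \xrightarrow{c_1} \cdots \xrightarrow{c_{n-1}} C_n$ such that for every object $X$ the sequence $0 \to \mathcal{C}(C_n,X) \to \cdots \to \mathcal{C}(C_1,X) \to \mathcal{C}(A',X) \to \mathcal{C}(A,X)$ is exact;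 equivalently, $c_{n-1}$ is an epimorphism, $c_0$ is a weak cokernel of $f$ and $c_i$ is a weak cokernel of $c_{i-1}$ for $1 \leqslant i \leqslant n-1$. For $n = 0$: a $0$-kernel of $f : A \to A'$ is a monomorphism $b : B \to A'$ such that $f = bc$ for some split epimorphism $c : A \to B$; a $0$-cokernel of $f$ is an epimorphism $e : A \to C$ such that $f = se$ for some split monomorphism $s : C \to A'$. $\mathcal{C}$ has $n$-kernels (resp. $n$-cokernels) if every morphism in $\mathcal{C}$ has an $n$-kernel (resp. $n$-cokernel). *)

(* Defs.v *)
From HB Require Import structures.
From mathcomp Require Import all_boot all_algebra.
Set Implicit Arguments. Unset Strict Implicit. Unset Printing Implicit Defensive.
Import GRing.Theory.
Local Open Scope ring_scope.

Record PreAdd := {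
  Obj : Type;
  Hom : Obj -> Obj -> zmodType;
  comp : forall X Y Z : Obj, Hom Y Z -> Hom X Y -> Hom X Z;
  idm : forall X : Obj, Hom X X;
  compA : forall (W X Y Z : Obj) (h : Hom Y Z) (g : Hom X Y) (f : Hom W X),
      comp h (comp g f) = comp (comp h g) f;
  comp1l : forall (X Y : Obj) (f : Hom X Y), comp (idm Y) f = f;
  comp1r : forall (X Y : Obj) (f : Hom X Y), comp f (idm X) = f;
  compDl : forall (X Y Z : Obj) (g1 g2 : Hom Y Z) (f : Hom X Y),
      comp (g1 + g2) f = comp g1 f + comp g2 f;
  compDr : forall (X Y Z : Obj) (g : Hom Y Z) (f1 f2 : Hom X Y),
      comp g (f1 + f2) = comp g f1 + comp g f2
}.

Arguments comp {p X Y Z}.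
Arguments idm {p}.

Section Defs.
Variable C : PreAdd.

Definition mono {X Y : Obj C} (f : Hom X Y) : Prop :=
  forall (W : Obj C) (u v : Hom W X), comp f u = comp f v -> u = v.

Definition epi {X Y : Obj C} (f : Hom X Y) : Prop :=
  forall (W : Obj C) (u v : Hom Y W), comp u f = comp v f -> u = v.

Definition split_epi {X Y : Obj C} (f : Hom X Y) : Prop :=
  exists s : Hom Y X, comp f s = idm Y.

Definition split_mono {X Y : Obj C} (f : Hom X Y) : Prop :=
  exists r : Hom Y X, comp r f = idm X.

Definition idempotent_complete : Prop :=
  forall (X : Obj C) (e : Hom X X), comp e e = e ->
    exists (Y : Obj C) (f : Hom Y X) (g : Hom X Y), comp f g = e /\ comp g f = idm Y.

Definition weak_kernel {A B K : Obj C} (f : Hom A B) (k : Hom K A) : Prop :=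
  comp f k = 0 /\
  forall (U : Obj C) (u : Hom U A), comp f u = 0 -> exists v : Hom U K, u = comp k v.

Definition weak_cokernel {A B Q : Obj C} (f : Hom A B) (c : Hom B Q) : Prop :=
  comp c f = 0 /\
  forall (U : Obj C) (u : Hom B U), comp u f = 0 -> exists v : Hom Q U, u = comp v c.

Definition has_weak_kernels : Prop :=
  forall (A B : Obj C) (f : Hom A B), exists (K : Obj C) (k : Hom K A), weak_kernel f k.

Definition has_weak_cokernels : Prop :=
  forall (A B : Obj C) (f : Hom A B), exists (Q : Obj C) (c : Hom B Q), weak_cokernel f c.

(* kernel_tail m b : there are B_1 -b_1-> ... -> B_m -b_m-> B with b_i a weak
   kernel of b_{i+1}, b_m a weak kernel of b, and the first map of the whole
   chain (b_1, or b itself if m = 0) a monomorphism. *)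
Fixpoint kernel_tail (m : nat) {B A : Obj C} (b : Hom B A) : Prop :=
  match m with
  | 0 => mono b
  | m'.+1 => exists (B' : Obj C) (b' : Hom B' B), weak_kernel b b' /\ kernel_tail m' b'
  end.

(* dual: c : A -> Q followed by Q -> C_1 -> ... -> C_m, each map a weak cokernel
   of the previous one, the last map of the whole chain an epimorphism. *)
Fixpoint cokernel_tail (m : nat) {A Q : Obj C} (c : Hom A Q) : Prop :=
  match m with
  | 0 => epi c
  | m'.+1 => exists (Q' : Obj C) (c' : Hom Q Q'), weak_cokernel c c' /\ cokernel_tail m' c'
  end.

Definition has_nkernel (n : nat) {A A' : Obj C} (f : Hom A A') : Prop :=
  match n with
  | 0 => exists (B : Obj C) (b : Hom B A') (c : Hom A B),
           mono b /\ split_epi c /\ f = comp b c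
  | n'.+1 => exists (B : Obj C) (b : Hom B A), weak_kernel f b /\ kernel_tail n' b
  end.

Definition has_ncokernel (n : nat) {A A' : Obj C} (f : Hom A A') : Prop :=
  match n with
  | 0 => exists (Q : Obj C) (e : Hom A Q) (s : Hom Q A'),
           epi e /\ split_mono s /\ f = comp s e
  | n'.+1 => exists (Q : Obj C) (c : Hom A' Q), weak_cokernel f c /\ cokernel_tail n' c
  end.

Definition has_nkernels (n : nat) : Prop :=
  forall (A A' : Obj C) (f : Hom A A'), has_nkernel n f.

Definition has_ncokernels (n : nat) : Prop :=
  forall (A A' : Obj C) (f : Hom A A'), has_ncokernel n f.

End Defs.

(* Main.v *)
From Pilot Require Import Defs.
From mathcomp Require Import all_boot all_algebra.
Set Implicit Arguments. Unset Strict Implicit. Unset Printing Implicit Defensive.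
Import GRing.Theory.
Local Open Scope ring_scope.
Local Notation Hom := Pilot.Defs.Hom.
Local Notation comp := Pilot.Defs.comp.
Local Notation idm := Pilot.Defs.idm.
Local Notation compDl := Pilot.Defs.compDl.
Local Notation compDr := Pilot.Defs.compDr.
Local Notation compA := Pilot.Defs.compA.
Local Notation comp1l := Pilot.Defs.comp1l.
Local Notation comp1r := Pilot.Defs.comp1r.

Lemma comp0l (C : PreAdd) (X Y Z : Obj C) (f : Hom X Y) : comp (0 : Hom Y Z) f = 0.
Proof.
have H := compDl (0 : Hom Y Z) 0 f; rewrite addr0 in H.
by apply: (@addrI _ (comp (0 : Hom Y Z) f)); rewrite addr0 -H.
Qed.

Lemma comp0r (C : PreAdd) (X Y Z : Obj C) (g : Hom Y Z) : comp g (0 : Hom X Y) = 0.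
Proof.
have H := compDr g (0 : Hom X Y) 0; rewrite addr0 in H.
by apply: (@addrI _ (comp g (0 : Hom X Y))); rewrite addr0 -H.
Qed.

Lemma compBl (C : PreAdd) (X Y Z : Obj C) (g1 g2 : Hom Y Z) (f : Hom X Y) :
  comp (g1 - g2) f = comp g1 f - comp g2 f.
Proof.
have H := compDl g2 (- g2) f; rewrite subrr comp0l in H.
have HN : comp (- g2) f = - comp g2 f.
  by apply/eqP; rewrite -addr_eq0 addrC -H.
by rewrite compDl HN.
Qed.

Lemma compBr (C : PreAdd) (X Y Z : Obj C) (g : Hom Y Z) (f1 f2 : Hom X Y) :
  comp g (f1 - f2) = comp g f1 - comp g f2.
Proof.
have H := compDr g f2 (- f2); rewrite subrr comp0r in H.
have HN : comp g (- f2) = - comp g f2.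
  by apply/eqP; rewrite -addr_eq0 addrC -H.
by rewrite compDr HN.
Qed.

Fixpoint coseq (C : PreAdd) (m : nat) (W X : Obj C) (x : Hom W X) : Prop :=
  match m with
  | 0 => True
  | m'.+1 => exists (V : Obj C) (x' : Hom V W), weak_cokernel x' x /\ coseq m' x'
  end.

Lemma claim (C : PreAdd) (m : nat) : forall (B Z : Obj C) (b : Hom B Z), kernel_tail m b ->
  forall (W X X' : Obj C) (x' : Hom W X) (x : Hom X X'), weak_cokernel x' x -> coseq m x' ->
  forall s : Hom X B, comp b (comp s x') = 0 -> exists t : Hom X' B, comp b (comp t x) = comp b s.
Proof.
elim: m => [|m IH] B Z b Hb W X X' x' x [Hx0 Hx] Hc s Hs.
- have Hs0 : comp s x' = 0 by apply: Hb; rewrite Hs comp0r.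
  have [t ->] := Hx _ s Hs0. by exists t.
- case: Hb => [B' [b' [[Hbb' Hb'] Hkt]]].
  case: Hc => [V [x'' [[Hx''0 Hx''] Hc]]].
  have [s' Es'] := Hb' _ (comp s x') Hs.
  have Hs' : comp b' (comp s' x'') = 0 by rewrite compA -Es' -compA Hx''0 comp0r.
  have [t' Ht'] := IH _ _ b' Hkt _ _ _ x'' x' (conj Hx''0 Hx'') Hc s' Hs'.
  have : comp (s - comp b' t') x' = 0 by rewrite compBl -compA Ht' Es' subrr.
  move/Hx => [t Et]. exists t.
  by rewrite -Et compBr compA Hbb' comp0l subr0.
Qed.

Lemma epi_split (C : PreAdd) (X E P : Obj C) (d : Hom X E) (e : Hom E E) (i : Hom P E) (p : Hom E P) :
  comp p i = idm P -> comp i p = e ->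
  (forall (U : Obj C) (u : Hom E U), comp u d = 0 -> comp u e = 0) -> epi (comp p d).
Proof.
move=> Epi Eip Eann U u1 u2 H.
have H2 : comp (comp (u1 - u2) p) d = 0 by rewrite -compA compBl H subrr.
have Hp : comp (comp (u1 - u2) p) e = comp (u1 - u2) p.
  by rewrite -Eip compA -(compA _ p i) Epi comp1r.
have H0 : comp (u1 - u2) p = 0 by rewrite -Hp; apply: Eann.
apply/eqP; rewrite -subr_eq0; apply/eqP.
by rewrite -(comp1r (u1 - u2)) -Epi compA H0 comp0l.
Qed.

Lemma key (C : PreAdd) (m : nat) : idempotent_complete C -> has_weak_cokernels C ->
  has_nkernels C m.+1 ->
  forall (W X E : Obj C) (x' : Hom W X) (d : Hom X E), weak_cokernel x' d -> coseq m x' ->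
  exists (P : Obj C) (d' : Hom X P), weak_cokernel x' d' /\ epi d'.
Proof.
move=> Hic Hwc Hnk W X E x' d Hd Hc.
have [Y [y [Hy0 Hy]]] := Hwc _ _ d.
have [B [b [[Hb0 Hb] Hkt]]] := Hnk _ _ y.
have [s Es] := Hb _ d Hy0.
have Hs : comp b (comp s x') = 0 by rewrite compA -Es Hd.1.
have [t Ht] := claim Hkt Hd Hc Hs.
have : comp (idm E - comp b t) d = 0 by rewrite compBl comp1l -compA Ht -Es subrr.
move/Hy => [v Ev].
have Ebb : comp (comp b t) b = b.
  have : comp (idm E - comp b t) b = 0 by rewrite Ev -compA Hb0 comp0r.
  by rewrite compBl comp1l => /eqP; rewrite subr_eq0 => /eqP H; rewrite -H.
have Eee : comp (comp b t) (comp b t) = comp b t by rewrite compA Ebb.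
have Eed : comp (comp b t) d = d.
  have : comp (idm E - comp b t) d = 0 by rewrite Ev -compA Hy0 comp0r.
  by rewrite compBl comp1l => /eqP; rewrite subr_eq0 => /eqP H; rewrite -H.
have Eann : forall (U : Obj C) (u : Hom E U), comp u d = 0 -> comp u (comp b t) = 0.
  move=> U u /Hy [w ->]. by rewrite -compA (compA y b t) Hb0 comp0l comp0r.
have [P [i [p [Eip Epi]]]] := Hic _ _ Eee.
exists P, (comp p d); split; [split|].
- by rewrite -compA Hd.1 comp0r.
- move=> U u /Hd.2 [w ->]. exists (comp w i). by rewrite -compA (compA i p d) Eip Eed.
- exact: epi_split Epi Eip Eann.
Qed.

Lemma tailT (C : PreAdd) : idempotent_complete C -> has_weak_cokernels C ->
  forall j k, has_nkernels C (k + j).+1 ->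
  forall (W X : Obj C) (x' : Hom W X), coseq k x' ->
  exists (Q : Obj C) (c : Hom X Q), weak_cokernel x' c /\ cokernel_tail j c.
Proof.
move=> Hic Hwc j; elim: j => [|j IH] k Hnk W X x' Hc.
- have [E [d Hd]] := Hwc _ _ x'. rewrite addn0 in Hnk.
  have [P [d' [H1 H2]]] := key Hic Hwc Hnk Hd Hc.
  by exists P, d'.
- have [E [d Hd]] := Hwc _ _ x'.
  have Hc' : coseq k.+1 d by exists W, x'.
  have Hnk' : has_nkernels C (k.+1 + j).+1 by rewrite addSnnS.
  have [Q [c [Hc1 Hc2]]] := IH k.+1 Hnk' _ _ d Hc'.
  exists E, d; split => //. by exists Q, c.
Qed.

Lemma idem_compl (C : PreAdd) (X : Obj C) (q : Hom X X) :
  comp q q = q -> comp (idm X - q) (idm X - q) = idm X - q.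
Proof. by move=> H; rewrite compBl comp1l compBr comp1r H subrr subr0. Qed.

Lemma k2c (C : PreAdd) (n : nat) : idempotent_complete C -> has_weak_cokernels C ->
  has_nkernels C n -> has_ncokernels C n.
Proof.
case: n => [|n] Hic Hwc Hnk A A' f.
- have [Y [y [Hy0 Hy]]] := Hwc _ _ f.
  have [B [b [c [Hbm [[r Ecr] Ey]]]]] := Hnk _ _ y.
  have Err : comp (comp r c) (comp r c) = comp r c.
    by rewrite compA -(compA r c r) Ecr comp1r.
  have Eee := idem_compl Err.
  have Hcf : comp c f = 0 by apply: Hbm; rewrite compA -Ey Hy0 comp0r.
  have Eef : comp (idm A' - comp r c) f = f by rewrite compBl comp1l -compA Hcf comp0r subr0.
  have Eann : forall (U : Obj C) (u : Hom A' U), comp u f = 0 -> comp u (idm A' - comp r c) = 0.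
    move=> U u /Hy [w ->].
    by rewrite -compA compBr comp1r Ey -compA (compA c r c) Ecr comp1l subrr comp0r.
  have [P [i [p [Eip Epi]]]] := Hic _ _ Eee.
  exists P, (comp p f), i; split; [|split].
  + exact: epi_split Epi Eip Eann.
  + by exists p.
  + by rewrite compA Eip Eef.
- have Hnk' : has_nkernels C (0 + n).+1 by rewrite add0n.
  have := @tailT C Hic Hwc n 0 Hnk' _ _ f I.
  move=> [Q [c [H1 H2]]]. by exists Q, c.
Qed.

Definition opC (C : PreAdd) : PreAdd :=
  @Build_PreAdd (Obj C) (fun X Y => Hom Y X) (fun X Y Z g f => comp f g) (fun X => idm X)
    (fun W X Y Z h g f => esym (compA f g h))
    (fun X Y f => comp1r f) (fun X Y f => comp1l f)
    (fun X Y Z g1 g2 f => compDr f g1 g2) (fun X Y Z g f1 f2 => compDl f1 f2 g).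

Lemma ct_op1 (C : PreAdd) m : forall (A Q : Obj C) (c : Hom A Q),
  cokernel_tail m c -> kernel_tail (C := opC C) m (c : @Pilot.Defs.Hom (opC C) Q A).
Proof.
elim: m => [|m IH] A Q c //= [Q' [c' [H1 H2]]].
exists Q', c'; split; [exact H1 | exact: IH].
Qed.

Lemma ct_op2 (C : PreAdd) m : forall (A Q : Obj C) (c : @Pilot.Defs.Hom (opC C) A Q),
  cokernel_tail m c -> kernel_tail (C := C) m (c : Hom Q A).
Proof.
elim: m => [|m IH] A Q c //= [Q' [c' [H1 H2]]].
exists Q', c'; split; [exact H1 | exact: IH].
Qed.

Theorem theorem1 (C : PreAdd) (n : nat) :
  idempotent_complete C -> has_weak_kernels C -> has_weak_cokernels C ->
  (has_nkernels C n <-> has_ncokernels C n).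
Proof.
move=> Hic Hwk Hwc; split; first exact: k2c.
move=> Hnc.
have Hic' : idempotent_complete (opC C).
  move=> X e He. have [Y [f [g [H1 H2]]]] := Hic X e He.
  by exists Y, g, f.
have Hwc' : has_weak_cokernels (opC C) by move=> A B f; exact: (Hwk B A f).
have Hnk' : has_nkernels (opC C) n.
  move=> A A' f; case: n Hnc => [|n] Hnc.
  + exact: (Hnc A' A f).
  + have [Q [c [H1 H2]]] := Hnc A' A f.
    exists Q, c; split; [exact H1 | exact: ct_op1].
have := k2c Hic' Hwc' Hnk'.
move=> H A A' f; case: n Hnc H Hnk' => [|n] Hnc H Hnk'.
- exact: (H A' A f).
- have [Q [c [H1 H2]]] := H A' A f.
  exists Q, c; split; [exact H1 | exact: ct_op2].
Qed.
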